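(* Consider COMPLEMENT-GRUNDY. Then $\mathcal{SG}(n)/n\rightarrow 0$, as $n\rightarrow \infty$.
   Context: COMPLEMENT-GRUNDY is the impartial normal-play heap game where a move replaces a heap $n$ by the disjunctive sum of $k$ heaps of size $d$ and one heap of size $r$ (omitted if $r=0$), where $n=kd+r$, $1\le d<n$, $0\le r<d$, and $k\ge 2$; a heap of size $1$ is terminal. $\mathcal{SG}$ denotes the Sprague-Grundy value (mex rule, nim-sum for disjunctive sums). *)

(* Defs.v *)
From Stdlib Require Import PeanoNat.
From mathcomp Require Import all_boot all_order all_algebra.

Set Implicit Arguments.
Unset Strict Implicit.
Unset Printing Implicit Defensive.

Definition nimsum (a b : nat) : nat := Nat.lxor a b.

Definition mex (s : seq nat) : nat :=
  find (fun m => m \notin s) (iota 0 (size s).+1).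

Definition nimsum_copies (k g : nat) : nat := iter k (nimsum g) 0.

(* Grundy value of the option of heap n obtained with divisor d:
   n = k*d + r, k = n %/ d, r = n %% d; the position is the disjunctive sum
   of k heaps of size d and one heap of size r (omitted if r = 0). *)
Definition option_value (sg : nat -> nat) (n d : nat) : nat :=
  let k := n %/ d in let r := n %% d in
  if r == 0 then nimsum_copies k (sg d)
  else nimsum (nimsum_copies k (sg d)) (sg r).

Definition moves (n : nat) : seq nat :=
  [seq d <- iota 1 n | (d < n) && (2 <= n %/ d)].

(* Fuel-based recursion; fuel n suffices for heap n (all d, r in an option
   are < n). *)
Fixpoint sg_fuel (fuel n : nat) : nat :=
  match fuel with
  | 0 => 0
  | f.+1 => mex [seq option_value (sg_fuel f) n d | d <- moves n]
  end.

Definition SG (n : nat) : nat := sg_fuel n n.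

(* Main.v *)
Require Import Defs.
From Stdlib Require Import PeanoNat Lia.
From mathcomp Require Import all_boot all_order all_algebra.
From mathcomp Require Import all_classical all_reals all_analysis.
From mathcomp Require Import zify.

Local Open Scope nat_scope.
Lemma expn_pow j : 2 ^ j = Nat.pow 2 j.
Proof. elim: j => // j IH. by rewrite expnS IH. Qed.

Lemma lxor_lt (a b j : nat) : (a < 2 ^ j)%N -> (b < 2 ^ j)%N -> (nimsum a b < 2 ^ j)%N.
Proof.
rewrite expn_pow => /ltP ha /ltP hb; apply/ltP; rewrite /nimsum.
have hp : (Nat.pow 2 j <> 0)%coq_nat by apply Nat.pow_nonzero.
have := Nat.shiftr_lxor a b j; rewrite !Nat.shiftr_div_pow2.
rewrite (proj2 (Nat.div_small_iff _ _ hp) ha) (proj2 (Nat.div_small_iff _ _ hp) hb).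
rewrite Nat.lxor_0_l => h; exact: (proj1 (Nat.div_small_iff _ _ hp) h).
Qed.

Lemma copies_lt k g j : (g < 2 ^ j)%N -> (nimsum_copies k g < 2 ^ j)%N.
Proof.
move=> hg; elim: k => [|k IH] /=; first by rewrite expn_gt0.
exact: lxor_lt.
Qed.

Lemma copies2 g : nimsum_copies 2 g = 0.
Proof. by rewrite /nimsum_copies /= /nimsum Nat.lxor_0_r Nat.lxor_nilpotent. Qed.

Lemma mex_le (s : seq nat) B : (forall x, x \in s -> x < B) -> mex s <= B.
Proof.
move=> hs; rewrite /mex; set p := (fun m => m \notin s).
case: (leqP (find p (iota 0 (size s).+1)) B) => // hlt.
have := before_find 0 hlt; rewrite nth_iota; last first.
  by apply: leq_trans hlt _; rewrite -[X in _ <= X](size_iota 0 (size s).+1) find_size.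
by rewrite /p add0n => /negbFE /hs; rewrite ltnn.
Qed.

Lemma sg_bound j : forall f n, n < 3 ^ j -> sg_fuel f n < 2 ^ j.
Proof.
elim: j => [|j IH] f n hn.
  by case: f => [|f] //=; move: hn; rewrite expn0 ltnS leqn0 => /eqP ->.
case: f => [|f] /=; first by rewrite expn_gt0.
apply: leq_ltn_trans (_ : 2 ^ j < 2 ^ j.+1); last by rewrite ltn_exp2l.
apply: mex_le => x /mapP [d hd ->].
move: hd; rewrite mem_filter mem_iota => /andP [/andP [hdn hk] /andP [h1d _]].
have hdiv := divn_eq n d; have hmod := ltn_pmod n (h1d : 0 < d).
set k := n %/ d in hk hdiv *; set r := n %% d in hmod hdiv *.
have hr : r < 3 ^ j.
  rewrite expnS in hn; nia.
rewrite /option_value -/k -/r.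
have hc : nimsum_copies k (sg_fuel f d) < 2 ^ j.
  case: (ltnP k 3) => hk3.
    have -> : k = 2 by lia.
    by rewrite copies2 expn_gt0.
  apply: copies_lt; apply: IH; rewrite expnS in hn; nia.
case: (r == 0) => //; apply: lxor_lt => //; exact: IH.
Qed.
Lemma growth J : 2 ^ J * (J + 2) <= 2 * 3 ^ J.
Proof. elim: J => // J IH; rewrite !expnS; nia. Qed.

Lemma grow_mono K J j : 2 ^ J.+1 * K <= 3 ^ J -> J <= j -> 2 ^ j.+1 * K <= 3 ^ j.
Proof.
move=> h; elim: j => [|j IH]; first by move=> HJ; have e : J = 0 by [lia]; rewrite e in h.
rewrite leq_eqVlt => /orP [/eqP <- //| /IH {}IH]; rewrite !(expnS _ j.+1) [3 ^ j.+1]expnS; nia.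
Qed.

Lemma SG_small K : exists N, forall n, N <= n -> SG n * K <= n.
Proof.
set J := 4 * K.
have hJ : 2 ^ J.+1 * K <= 3 ^ J by have := growth J; rewrite expnS; lia.
exists (3 ^ J) => n hn.
have n0 : 0 < n by apply: leq_trans hn; rewrite expn_gt0.
set j := trunc_log 3 n.
have h1 := trunc_logP (isT : 1 < 3) n0; have h2 := trunc_log_ltn n (isT : 1 < 3).
have hjJ : J <= j := trunc_log_max (isT : 1 < 3) hn.
have hs := sg_bound _ n n h2.
have := @grow_mono _ _ j hJ hjJ; rewrite -/j in h1 h2 hs *; rewrite /SG; nia.
Qed.

Import Order.TTheory GRing.Theory Num.Theory.
Local Open Scope classical_set_scope.
Local Open Scope ring_scope.

Theorem mainTheorem10 (R : realType) :
  (fun n : nat => (SG n)%:R / (n%:R : R)) @ \oo --> 0.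
Proof.
apply/cvgrPdist_lt => eps eps0.
set K := (Num.trunc (eps^-1)).+1.
have hK : eps^-1 < K%:R by rewrite -truncn_lt_nat ?invr_ge0 ?ltW.
have [N HN] := SG_small K.+1.
exists N.+1 => // n /= hn.
have n0 : (0 < n)%N by apply: leq_trans hn.
have hS := HN n (ltnW hn).
have hS' : (SG n * K < n)%N by nia.
rewrite sub0r normrN ger0_norm ?divr_ge0 //.
rewrite ltr_pdivrMr ?ltr0n // mulrC -ltr_pdivrMr //.
apply: le_lt_trans (_ : (SG n)%:R * K%:R < _); last by rewrite -natrM ltr_nat.
by rewrite ler_wpM2l // ltW.
Qed.
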